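(* Let $n=pq$ where $p$ and $q$ are distinct odd primes, and let $\lambda=\operatorname{lcm}(p^2+p+1,\,q^2+q+1)$. Let $a,b\in\mathbb{Z}$ be such that $f(X)=X^3-aX^2+bX-1$ is irreducible modulo $p$ and modulo $q$, and such that $L(a,b)$ (defined below) is invertible modulo $n$. Then for every integer $k$, the pair $(s_k(a,b),s_{-k}(a,b))$ lies in $\Gamma$ and $$\frac{L\big(s_k(a,b),\,s_{-k}(a,b)\big)}{L(a,b)}\equiv k \pmod n.$$
   Context: For integers (or residues modulo $n^2$) $x,y$, the sequence $(s_k(x,y))_{k\in\mathbb{Z}}$ modulo $n^2$ is defined by the recurrence $s_{k+3}(x,y)\equiv x\,s_{k+2}(x,y)-y\,s_{k+1}(x,y)+s_k(x,y)\pmod{n^2}$ for all $k\in\mathbb{Z}$ and initial values $s_0(x,y)\equiv 3$, $s_1(x,y)\equiv x$, $s_{-1}(x,y)\equiv y\pmod{n^2}$ (the recurrence determines the sequence for all $k\in\mathbb{Z}$). Let $\Gamma=\{(x,y)\in\mathbb{Z}^2 : s_\lambda(x,y)\equiv 3 \pmod n\}$ and define $L:\Gamma\to\mathbb{Z}/n\mathbb{Z}$ by $L(x,y)=\frac{s_\lambda(x,y)-3}{n} \bmod n$, where $s_\lambda(x,y)$ is taken as a representative modulo $n^2$ (this is well defined since $s_\lambda(x,y)-3$ is divisible by $n$). *)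

(* Defs.v *)
From HB Require Import structures.
From mathcomp Require Import all_boot all_order all_algebra.
Set Implicit Arguments. Unset Strict Implicit. Unset Printing Implicit Defensive.
Import Order.TTheory GRing.Theory Num.Theory.
Local Open Scope ring_scope.

(* Exact integer sequence: triples (s_{k-1}, s_k, s_{k+1}). *)
Definition fwd_step (x y : int) (t : int * int * int) : int * int * int :=
  let: (u, v, w) := t in (v, w, x * w - y * v + u).
Definition bwd_step (x y : int) (t : int * int * int) : int * int * int :=
  let: (u, v, w) := t in (w - x * v + y * u, u, v).

(* s_k(x,y) over Z, with s_{-1} = y, s_0 = 3, s_1 = x and
   s_{k+3} = x s_{k+2} - y s_{k+1} + s_k for all k in Z. *)
Definition sZ (k : int) (x y : int) : int :=
  match k with
  | Posz m => (iter m (fwd_step x y) (y, 3, x)).1.2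
  | Negz m => (iter m.+1 (bwd_step x y) (y, 3, x)).1.2
  end.

Definition s_mod (n : nat) (k : int) (x y : int) : int :=
  (sZ k x y %% (n ^ 2)%:Z)%Z.

Definition Gamma (n lam : nat) (x y : int) : Prop :=
  (n%:Z %| s_mod n lam%:Z x y - 3)%Z.

Definition L (n lam : nat) (x y : int) : 'Z_n :=
  (((s_mod n lam%:Z x y - 3) %/ n%:Z)%Z)%:~R.

Definition fpoly (p : nat) (a b : int) : {poly 'F_p} :=
  'X^3 - (a%:~R) *: 'X^2 + (b%:~R) *: 'X - 1.

(* Main.v *)
Require Import Defs.
From HB Require Import structures.
From mathcomp Require Import all_boot all_order all_algebra.
From mathcomp Require Import falgebra fieldext finfield algC.
From mathcomp Require Import ring zify.
Import Order.TTheory GRing.Theory Num.Theory.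
Local Open Scope ring_scope.

Section Seq.
Variables x y : int.
Definition gZ (k : int) : int * int * int :=
  match k with
  | Posz m => iter m (fwd_step x y) (y, 3, x)
  | Negz m => iter m.+1 (bwd_step x y) (y, 3, x)
  end.

Lemma fwd_bwd t : fwd_step x y (bwd_step x y t) = t.
Proof. case: t => [[u v] w] /=; congr (_, _, _); ring. Qed.

Lemma gZ_succ k : gZ (k + 1) = fwd_step x y (gZ k).
Proof.
case: k => m.
  have -> : Posz m + 1 = Posz m.+1 by lia.
  by [].
case: m => [|m].
  have -> : Negz 0 + 1 = Posz 0 by [].
  by rewrite /gZ [in RHS]iterS fwd_bwd.
have -> : Negz m.+1 + 1 = Negz m by lia.
by rewrite /gZ [in RHS]iterS fwd_bwd.
Qed.

Lemma sZ_gZ k : sZ k x y = (gZ k).1.2.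
Proof. by case: k. Qed.

Lemma sZ_succ k : sZ (k + 1) x y = (gZ k).2.
Proof. by rewrite sZ_gZ gZ_succ; case: (gZ k) => [[u v] w]. Qed.

Lemma gZ_fst k : (gZ k).1.1 = sZ (k - 1) x y.
Proof.
have -> : k = (k - 1) + 1 by ring.
rewrite gZ_succ; have -> : k - 1 + 1 - 1 = k - 1 by ring.
by rewrite sZ_gZ; case: (gZ (k-1)) => [[u v] w].
Qed.

Lemma sZ_rec k : sZ (k + 3) x y = x * sZ (k + 2) x y - y * sZ (k + 1) x y + sZ k x y.
Proof.
have e3 : k + 3 = (k + 1) + 1 + 1 by ring.
have e2 : k + 2 = (k + 1) + 1 by ring.
rewrite e3 e2 sZ_succ gZ_succ.
have := sZ_succ (k + 1); have := gZ_fst (k + 1); have := sZ_gZ (k + 1).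
case: (gZ (k + 1)) => [[u v] w] /= -> -> ->.
by have -> : k + 1 - 1 = k by ring.
Qed.

Lemma sZ0 : sZ 0 x y = 3. Proof. by []. Qed.
Lemma sZ1 : sZ 1 x y = x. Proof. by []. Qed.
Lemma sZN1 : sZ (-1) x y = y. Proof. by []. Qed.
End Seq.

Lemma rec_ext (R : comRingType) (S : pred R) (xr yr : R) (D : int -> R) (i0 : int) :
  (forall u v, S u -> S v -> S (u + v)) -> (forall r u, S u -> S (r * u)) ->
  (forall k, S (D (k + 3) - xr * D (k + 2) + yr * D (k + 1) - D k)) ->
  S (D i0) -> S (D (i0 + 1)) -> S (D (i0 + 2)) -> forall k, S (D k).
Proof.
move=> SD SM Srec S0 S1 S2.
have SN u : S u -> S (- u) by move=> Su; rewrite -mulN1r; apply: (SM).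
have up n : [/\ S (D (i0 + n%:Z)), S (D (i0 + n%:Z + 1)) & S (D (i0 + n%:Z + 2))].
  elim: n => [|n [H0 H1 H2]]; first by rewrite addr0.
  have e1 : i0 + n.+1%:Z = i0 + n%:Z + 1 by lia.
  have e2 : i0 + n.+1%:Z + 1 = i0 + n%:Z + 2 by lia.
  have e3 : i0 + n.+1%:Z + 2 = i0 + n%:Z + 3 by lia.
  rewrite e3 e2 e1; split => //.
  set k := i0 + n%:Z; have := Srec k.
  set E := (X in S X) => SE.
  have -> : D (k + 3) = E + (xr * D (k + 2) + ((- yr) * D (k + 1) + D k)) by rewrite /E; ring.
  by apply: (SD) => //; apply: (SD); [apply: (SM) | apply: (SD) => //; apply: (SM)].
have down n : [/\ S (D (i0 - n%:Z)), S (D (i0 - n%:Z + 1)) & S (D (i0 - n%:Z + 2))].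
  elim: n => [|n [H0 H1 H2]]; first by rewrite subr0.
  have e1 : i0 - n%:Z = i0 - n.+1%:Z + 1 by lia.
  have e2 : i0 - n%:Z + 1 = i0 - n.+1%:Z + 2 by lia.
  have e3 : i0 - n%:Z + 2 = i0 - n.+1%:Z + 3 by lia.
  move: H0 H1 H2; rewrite e3 e2 e1 => H0 H1 H2; split => //.
  set k := i0 - n.+1%:Z; have := Srec k.
  set E := (X in S X) => SE.
  have -> : D k = D (k + 3) + ((- xr) * D (k + 2) + (yr * D (k + 1) + (-1) * E)) by rewrite /E; ring.
  apply: (SD) => //; apply: (SD); first by apply: (SM).
  by apply: (SD); apply: (SM).
move=> k; have -> : k = i0 + (k - i0) by ring.
case: (k - i0) => n; first by case: (up n).
have -> : Negz n = - n.+1%:Z by rewrite NegzE.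
by case: (down n.+1).
Qed.

Lemma sZ_cong (M x y x' y' : int) : (M %| x - x')%Z -> (M %| y - y')%Z ->
  forall k, (M %| sZ k x y - sZ k x' y')%Z.
Proof.
move=> hx hy.
apply: (@rec_ext _ (fun u => (M %| u)%Z) x y (fun k => sZ k x y - sZ k x' y') (-1)).
- by move=> u v hu hv; rewrite rpredD.
- by move=> r u hu; rewrite dvdz_mull.
- move=> k /=; rewrite !sZ_rec.
  have -> : x * sZ (k + 2) x y - y * sZ (k + 1) x y + sZ k x y -
    (x' * sZ (k + 2) x' y' - y' * sZ (k + 1) x' y' + sZ k x' y') -
    x * (sZ (k + 2) x y - sZ (k + 2) x' y') + y * (sZ (k + 1) x y - sZ (k + 1) x' y') -
    (sZ k x y - sZ k x' y') = (x - x') * sZ (k + 2) x' y' + (- sZ (k + 1) x' y') * (y - y') by ring.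
  by apply: rpredD; [apply: dvdz_mulr | apply: dvdz_mull].
- exact: hy.
- by rewrite /= subrr dvdz0.
- exact: hx.
Qed.

Lemma sZ_roots (F : fieldType) (x y : int) (al be ga : F) :
  al * be * ga = 1 -> x%:~R = al + be + ga -> y%:~R = al * be + be * ga + ga * al ->
  forall k, (sZ k x y)%:~R = al ^ k + be ^ k + ga ^ k.
Proof.
move=> h1 hx hy.
have nz r : r \in [:: al; be; ga] -> r != 0.
  rewrite !inE => /or3P[] /eqP -> ; apply/eqP => h0; move: h1; rewrite h0 ?mul0r ?mulr0 ?mul0r;
  by move/eqP; by rewrite eq_sym oner_eq0.
have cub r : r \in [:: al; be; ga] -> r ^+ 3 = x%:~R * r ^+ 2 - y%:~R * r + 1.
  rewrite hx hy -h1 !inE => /or3P[] /eqP ->; ring.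
have pw r k : r \in [:: al; be; ga] -> r ^ (k + 3) = x%:~R * r ^ (k + 2) - y%:~R * r ^ (k + 1) + r ^ k.
  move=> hr; rewrite !expfzDr ?nz //.
  have e3 : r ^ (3:int) = r ^+ 3 by rewrite -exprnP.
  have e2 : r ^ (2:int) = r ^+ 2 by rewrite -exprnP.
  have e1 : r ^ (1:int) = r by rewrite expr1z.
  rewrite e1; apply: (@etrans _ _ (r ^ k * r ^+ 3)); first by ring.
  rewrite cub //; ring.
pose D k := (sZ k x y)%:~R - (al ^ k + be ^ k + ga ^ k).
suff : forall k, D k == 0 by move=> h k; apply/eqP; rewrite -subr_eq0; apply: h.
apply: (@rec_ext _ (fun u => u == 0) x%:~R y%:~R D (-1)).
- by move=> u v /eqP -> /eqP ->; rewrite addr0.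
- by move=> r u /eqP ->; rewrite mulr0.
- move=> k; rewrite /D sZ_rec !rmorphD !rmorphM /= !rmorphN /= rmorphM /=.
  rewrite !(pw al) ?(pw be) ?(pw ga) ?inE ?eqxx ?orbT //.
  apply/eqP; ring.
- rewrite /D sZN1 !exprN1.
  have ia : al^-1 = be * ga by apply: (mulfI (nz al _)); rewrite ?inE ?eqxx // mulfV ?nz ?inE ?eqxx // mulrA h1.
  have ib : be^-1 = ga * al by apply: (mulfI (nz be _)); rewrite ?inE ?eqxx ?orbT // mulfV ?nz ?inE ?eqxx ?orbT // -h1; ring.
  have ic : ga^-1 = al * be by apply: (mulfI (nz ga _)); rewrite ?inE ?eqxx ?orbT // mulfV ?nz ?inE ?eqxx ?orbT // -h1; ring.
  by rewrite ia ib ic hy; apply/eqP; ring.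
- by rewrite /D /= !expr0z; apply/eqP; ring.
- by rewrite /D /= !expr1z hx; apply/eqP; ring.
Qed.

Lemma cubic_roots (a b : int) : exists al be ga : algC,
  [/\ al * be * ga = 1, a%:~R = al + be + ga & b%:~R = al * be + be * ga + ga * al].
Proof.
have [al hal] := @solve_monicpoly algC 3 (nth 0 [:: 1; - b%:~R; a%:~R]) isT.
rewrite !big_ord_recr big_ord0 /= add0r expr0 mulr1 expr1 in hal.
have alnz : al != 0.
  apply/eqP => h0; move: hal; rewrite h0 !expr0n /= !mulr0 !addr0 => /eqP; by rewrite eq_sym oner_eq0.
pose s := a%:~R - al; pose t := al^-1.
have [be hbe] := @solve_monicpoly algC 2 (nth 0 [:: - t; s]) isT.
rewrite !big_ord_recr big_ord0 /= add0r expr0 mulr1 expr1 in hbe.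
have {}hbe : be ^+ 2 = - t + s * be by exact: hbe.
exists al, be, (s - be); split.
- have -> : al * be * (s - be) = al * (s * be - be ^+ 2) by ring.
  rewrite hbe /t; have -> : s * be - (- al^-1 + s * be) = al^-1 by ring.
  by rewrite mulfV.
- rewrite /s; ring.
- have hb : b%:~R = t + al * s.
    apply: (mulfI alnz); rewrite mulrDr /t mulfV //.
    have {}hal : al ^+ 3 = 1 - b%:~R * al + a%:~R * al ^+ 2 by rewrite hal; ring.
    apply/eqP; rewrite -subr_eq0 /s.
    have -> : al * b%:~R - (1 + al * (al * (a%:~R - al))) = al ^+ 3 - (1 - b%:~R * al + a%:~R * al ^+ 2) by ring.
    by rewrite hal subrr.
  rewrite hb; have -> : al * be + be * (s - be) + (s - be) * al = al * s + (s * be - be ^+ 2) by ring.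
  by rewrite hbe; ring.
Qed.

Lemma sZ_comp (x y j k : int) : sZ k (sZ j x y) (sZ (- j) x y) = sZ (j * k) x y.
Proof.
have [al [be [ga [h1 hx hy]]]] := cubic_roots x y.
have nz r : r \in [:: al; be; ga] -> r != 0.
  rewrite !inE => /or3P[] /eqP -> ; apply/eqP => h0; move: h1; rewrite h0 ?mul0r ?mulr0 ?mul0r;
  by move/eqP; rewrite eq_sym oner_eq0.
have ua : al \is a GRing.unit by rewrite unitfE nz // !inE eqxx.
have ub : be \is a GRing.unit by rewrite unitfE nz // !inE eqxx ?orbT.
have uc : ga \is a GRing.unit by rewrite unitfE nz // !inE eqxx ?orbT.
have sr := @sZ_roots _ x y al be ga h1 hx hy.
apply: (@intr_inj algC).
rewrite (@sZ_roots _ _ _ (al ^ j) (be ^ j) (ga ^ j)).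
- by rewrite sr (exprz_exp al) (exprz_exp be) (exprz_exp ga).
- by rewrite -!exprzMl ?unitrM ?ua ?ub // h1 exp1rz.
- by rewrite sr.
- rewrite sr -!exprzMl // -!exprz_inv.
  have ia : al^-1 = be * ga by apply: (mulfI (nz al _)); rewrite ?inE ?eqxx // mulfV ?nz ?inE ?eqxx // mulrA h1.
  have ib : be^-1 = ga * al by apply: (mulfI (nz be _)); rewrite ?inE ?eqxx ?orbT // mulfV ?nz ?inE ?eqxx ?orbT // -h1; ring.
  have ic : ga^-1 = al * be by apply: (mulfI (nz ga _)); rewrite ?inE ?eqxx ?orbT // mulfV ?nz ?inE ?eqxx ?orbT // -h1; ring.
  by rewrite ia ib ic; ring.
Qed.

Lemma vieta3 (F : fieldType) (A B u v w : F) :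
  u != v -> u != w -> v != w ->
  u ^+ 3 - A * u ^+ 2 + B * u - 1 = 0 ->
  v ^+ 3 - A * v ^+ 2 + B * v - 1 = 0 ->
  w ^+ 3 - A * w ^+ 2 + B * w - 1 = 0 -> u * v * w = 1.
Proof.
move=> nuv nuw nvw gu gv gw.
set Q := u ^+ 2 + u * v + v ^+ 2 - A * (u + v) + B.
have hQ : Q = 0.
  have : (u - v) * Q = (u ^+ 3 - A * u ^+ 2 + B * u - 1) - (v ^+ 3 - A * v ^+ 2 + B * v - 1)
    by rewrite /Q; ring.
  rewrite gu gv subrr => /eqP; rewrite mulf_eq0 subr_eq0 (negbTE nuv) /=; exact/eqP.
set Q' := u ^+ 2 + u * w + w ^+ 2 - A * (u + w) + B.
have hQ' : Q' = 0.
  have : (u - w) * Q' = (u ^+ 3 - A * u ^+ 2 + B * u - 1) - (w ^+ 3 - A * w ^+ 2 + B * w - 1)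
    by rewrite /Q'; ring.
  rewrite gu gw subrr => /eqP; rewrite mulf_eq0 subr_eq0 (negbTE nuw) /=; exact/eqP.
set E := u + v + w - A.
have hE : E = 0.
  have : (v - w) * E = Q - Q' by rewrite /E /Q /Q'; ring.
  rewrite hQ hQ' subrr => /eqP; rewrite mulf_eq0 subr_eq0 (negbTE nvw) /=; exact/eqP.
apply/eqP; rewrite -subr_eq0.
have -> : u * v * w - 1 = (u ^+ 3 - A * u ^+ 2 + B * u - 1) - E * u ^+ 2 - (Q - (u + v) * E) * u
  by rewrite /E /Q; ring.
by rewrite gu hE hQ; apply/eqP; ring.
Qed.

Lemma size_fpoly p a b : size (fpoly p a b) = 4%N.
Proof.
rewrite /fpoly -!addrA size_polyDl ?size_polyXn //.
apply: (leq_ltn_trans (size_polyD _ _)); rewrite gtn_max size_polyN; apply/andP; split.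
  by apply: (leq_ltn_trans (size_scale_leq _ _)); rewrite size_polyXn.
apply: (leq_ltn_trans (size_polyD _ _)); rewrite gtn_max size_polyN size_poly1 andbT.
by apply: (leq_ltn_trans (size_scale_leq _ _)); rewrite size_polyX.
Qed.

Lemma negbT_sym (T : eqType) (x y : T) : x != y -> y != x.
Proof. by rewrite eq_sym. Qed.

Lemma fpoly_dvd (p : nat) (a b : int) (lam : nat) :
  prime p -> irreducible_poly (fpoly p a b) -> (p ^ 2 + p + 1 %| lam)%N ->
  fpoly p a b %| 'X^lam - 1.
Proof.
move=> pp irr /dvdnP [c ->].
have [L dimL [z zroot zgen]] := irredp_FAdjoin irr.
rewrite size_fpoly /= in dimL.
have chL : p \in [pchar L] by rewrite pchar_lalg pchar_Fp.
set A : L := (a%:~R : 'F_p)%:A.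
set B : L := (b%:~R : 'F_p)%:A.
have fE w : (map_poly (in_alg L) (fpoly p a b)).[w] = w ^+ 3 - A * w ^+ 2 + B * w - 1.
  rewrite /fpoly !(rmorphB, rmorphD) /= !map_polyZ !map_polyXn map_polyX rmorph1 /=.
  by rewrite !hornerE.
have fix1 (e : 'F_p) : (e%:A : L) ^+ p = e%:A.
  have := Fermat's_little_theorem (1%AS : {subfield L}) (e%:A).
  by rewrite card_Fp // dimv1 expn1 rpredZ ?mem1v // => /esym/eqP.
have FA : Frobenius_aut chL A = A by rewrite pFrobenius_autE fix1.
have FB : Frobenius_aut chL B = B by rewrite pFrobenius_autE fix1.
have frob w : (w ^+ p) ^+ 3 - A * (w ^+ p) ^+ 2 + B * (w ^+ p) - 1
    = (w ^+ 3 - A * w ^+ 2 + B * w - 1) ^+ p.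
  rewrite -!(pFrobenius_autE chL) !(rmorphB, rmorphD, rmorphM, rmorphXn, rmorph1).
  rewrite /= !pFrobenius_autE /A /B !fix1; ring.
have p0 : (0 < p)%N by apply: prime_gt0.
have g0 : z ^+ 3 - A * z ^+ 2 + B * z - 1 = 0 by rewrite -fE; apply/eqP.
have g1 : (z ^+ p) ^+ 3 - A * (z ^+ p) ^+ 2 + B * (z ^+ p) - 1 = 0
  by rewrite frob g0 expr0n eqn0Ngt p0.
have g2 : (z ^+ (p ^ 2)) ^+ 3 - A * (z ^+ (p ^ 2)) ^+ 2 + B * (z ^+ (p ^ 2)) - 1 = 0
  by rewrite -mulnn exprM frob g1 expr0n eqn0Ngt p0.
have ferm : z ^+ (p ^ 3) = z.
  have := Fermat's_little_theorem {:L}%AS z.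
  rewrite card_Fp //= dimL memvf => /esym/eqP //.
have d1 : z ^+ p != z.
  apply/eqP => hz.
  have z1 : z \in 1%VS.
    by rewrite (Fermat's_little_theorem 1%AS) card_Fp // dimv1 expn1 hz.
  move: dimL; rewrite -zgen (Fadjoin_idP z1) dimv1 //.
have e3 : forall w : L, w ^+ (p ^ 3) = (w ^+ (p ^ 2)) ^+ p by move=> w; rewrite -exprM -expnSr.
have d2 : z ^+ (p ^ 2) != z.
  apply/eqP => hz; have : z ^+ p = z by rewrite -[in RHS]ferm e3 hz.
  by move/eqP; rewrite (negbTE d1).
have d3 : z ^+ p != z ^+ (p ^ 2).
  apply/eqP => hz.
  have h4 : (z ^+ (p ^ 2)) ^+ (p ^ 2) = z ^+ p.
    rewrite -exprM; have -> : (p ^ 2 * p ^ 2 = p ^ 3 * p)%N by rewrite -!expnSr -expnD.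
    by rewrite exprM ferm.
  have h5 : (z ^+ p) ^+ (p ^ 2) = z by rewrite -exprM -expnS ferm.
  have : z ^+ p = z by rewrite -{1}h4 -hz h5.
  by move/eqP; rewrite (negbTE d1).
have zN : z ^+ (p ^ 2 + p + 1) = 1.
  by rewrite !exprD expr1 -(@vieta3 _ A B _ _ _ (negbT_sym _ _ _ d1) (negbT_sym _ _ _ d2) d3 g0 g1 g2); ring.
set g : {poly 'F_p} := 'X^(c * (p ^ 2 + p + 1)) - 1.
have rg : root (map_poly (in_alg L) g) z.
  by rewrite /g rmorphB /= map_polyXn rmorph1 rootE !hornerE mulnC exprM zN expr1n subrr.
have f0 : fpoly p a b != 0.
  by apply/eqP => f0; move: (irr.1); rewrite f0 size_poly0.
have rG : root (map_poly (in_alg L) (gcdp (fpoly p a b) g)) z.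
  by rewrite gcdp_map root_gcd zroot rg.
have szG : size (gcdp (fpoly p a b) g) != 1%N.
  have gnz : gcdp (fpoly p a b) g != 0 by rewrite gcdp_eq0 negb_and f0.
  have := root_size_gt1 _ rG; rewrite map_poly_eq0 size_map_poly => /(_ gnz) h.
  by apply/eqP => e; rewrite e in h.
have := irr.2 _ szG (dvdp_gcdl _ _).
by move/eqp_dvdl => <-; apply: dvdp_gcdr.
Qed.

Arguments sZ : simpl never.

Definition fZ (a b : int) : {poly int} := 'X^3 - a *: 'X^2 + b *: 'X - 1.

Lemma Fp_intr0 (p : nat) (c : int) : prime p -> (c%:~R : 'F_p) = 0 -> (p%:Z %| c)%Z.
Proof.
move=> pp; case: c => n h; rewrite dvdzE /=.
  by rewrite (dvdn_pcharf (pchar_Fp pp)); apply/eqP.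
rewrite (dvdn_pcharf (pchar_Fp pp)); apply/eqP.
by move: h; rewrite NegzE mulrNz => /eqP; rewrite oppr_eq0 => /eqP.
Qed.

Lemma lift_div (p : nat) (a b : int) (lam : nat) : prime p ->
  fpoly p a b %| 'X^lam - 1 ->
  exists r G : {poly int}, 'X^lam - 1 = fZ a b * G + p%:Z *: r.
Proof.
move=> pp /dvdpP [g hg].
pose G := map_poly (fun c : 'F_p => (nat_of_ord c)%:Z) g.
have mapG : map_poly (intr : int -> 'F_p) G = g.
  apply/polyP => i; rewrite coef_map_id0 ?mulr0z // coef_map_id0 //=.
  exact: natr_Zp.
pose D := 'X^lam - 1 - fZ a b * G.
have mapD : map_poly (intr : int -> 'F_p) D = 0.
  rewrite /D /fZ !(rmorphB, rmorphD, rmorphM) /= mapG !map_polyZ !map_polyXn map_polyX rmorph1 hg.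
  by rewrite /fpoly mulrC subrr.
have dv i : (p%:Z %| D`_i)%Z.
  apply: (@Fp_intr0 p _ pp); rewrite -(coef_map_id0 D) ?mulr0z // mapD coef0 //.
exists (map_poly (fun c => (c %/ p%:Z)%Z) D), G.
have -> : p%:Z *: map_poly (fun c => (c %/ p%:Z)%Z) D = D.
  by apply/polyP => i; rewrite coefZ coef_map_id0 ?div0z // mulrC divzK.
by rewrite /D [in RHS]addrC subrK.
Qed.

Lemma pow_expand (R : comNzRingType) (c u : R) (m : nat) :
  exists w, (1 + c * u) ^+ m = 1 + m%:R * c * u + c ^+ 2 * w.
Proof.
elim: m => [|m [w IH]]; first by exists 0; rewrite expr0 mulr0 mul0r mul0r !addr0.
exists (m%:R * u ^+ 2 + w + c * u * w); rewrite exprS IH mulrS; ring.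
Qed.

Section Roots.
Variables (a b : int) (al be ga : algC).
Hypotheses (h1 : al * be * ga = 1) (hx : a%:~R = al + be + ga)
  (hy : b%:~R = al * be + be * ga + ga * al).

Definition ev (h : {poly int}) (x : algC) := (map_poly (intr : int -> algC) h).[x].
Definition tr3 h := ev h al + ev h be + ev h ga.

Lemma evD p q x : ev (p + q) x = ev p x + ev q x.
Proof. by rewrite /ev rmorphD hornerD. Qed.
Lemma evB p q x : ev (p - q) x = ev p x - ev q x.
Proof. by rewrite /ev rmorphB /= hornerD hornerN. Qed.
Lemma evM p q x : ev (p * q) x = ev p x * ev q x.
Proof. by rewrite /ev rmorphM hornerM. Qed.
Lemma evZ c p x : ev (c *: p) x = c%:~R * ev p x.
Proof. by rewrite /ev map_polyZ hornerZ. Qed.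
Lemma evXn n x : ev 'X^n x = x ^+ n.
Proof. by rewrite /ev map_polyXn hornerXn. Qed.
Lemma ev1 x : ev 1 x = 1.
Proof. by rewrite /ev rmorph1 hornerC. Qed.
Lemma evC c x : ev c%:P x = c%:~R.
Proof. by rewrite /ev map_polyC hornerC. Qed.
Lemma evX n p x : ev (p ^+ n) x = ev p x ^+ n.
Proof. by rewrite /ev rmorphXn horner_exp. Qed.

Lemma evXx x : ev 'X x = x.
Proof. by rewrite /ev map_polyX hornerX. Qed.
Lemma evN n x : ev n%:R x = n%:R.
Proof. by rewrite /ev rmorph_nat hornerMn -polyC1 hornerC. Qed.

Lemma tr3_int h : exists z : int, tr3 h = z%:~R.
Proof.
exists (\sum_(j < size h) h`_j * sZ j a b).
rewrite rmorph_sum /tr3 /ev.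
have sz : (size (map_poly (intr : int -> algC) h) <= size h)%N.
  by rewrite size_map_inj_poly //; apply: intr_inj.
rewrite !(horner_coef_wide _ sz) -!big_split /=; apply: eq_bigr => j _.
rewrite rmorphM coef_map /= (@sZ_roots _ a b al be ga h1 hx hy) -!exprnP; ring.
Qed.

Lemma tr3X i : tr3 'X^i = (sZ i a b)%:~R.
Proof.
by rewrite /tr3 /ev map_polyXn !hornerXn (@sZ_roots _ a b al be ga h1 hx hy) -!exprnP.
Qed.

Lemma ev_fZ x : x \in [:: al; be; ga] -> ev (fZ a b) x = 0.
Proof.
move=> hxin; rewrite /ev /fZ !(rmorphB, rmorphD) /= !map_polyZ !map_polyXn map_polyX rmorph1 /=.
rewrite !hornerE /= hx hy.
have E : (x - al) * (x - be) * (x - ga) = 0.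
  by move: hxin; rewrite !inE => /or3P[] /eqP ->; rewrite subrr ?mulr0 ?mul0r.
apply: (etrans _ E); rewrite -h1; ring.
Qed.

Lemma prime_part (ell lam : nat) (r G : {poly int}) :
  'X^lam - 1 = fZ a b * G + ell%:Z *: r ->
  forall i : nat, exists z1 : int, forall m : nat, exists z2 : int,
    sZ (i%:Z + (lam * m)%N%:Z) a b = sZ i a b + (m * ell)%N%:Z * z1 + (ell ^ 2)%N%:Z * z2.
Proof.
move=> hX i.
have rootp x : x \in [:: al; be; ga] -> x ^+ lam = 1 + ell%:R * ev r x.
  move=> hxin; have := congr1 (fun h => ev h x) hX.
  rewrite /= evB evD evM evZ evXn ev1 ev_fZ // mul0r add0r => /eqP; rewrite subr_eq => /eqP ->.
  by rewrite addrC.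
have [z1 hz1] := tr3_int ('X^i * r).
exists z1 => m.
have [w hw] := @pow_expand _ (ell%:Z)%:P r m.
have [z2 hz2] := tr3_int ('X^i * w).
exists z2.
apply: (@intr_inj algC).
have key x : x \in [:: al; be; ga] -> x ^ (i%:Z + (lam * m)%N%:Z) =
    ev 'X^i x + (m * ell)%N%:R * ev ('X^i * r) x + (ell ^ 2)%N%:R * ev ('X^i * w) x.
  move=> hxin; rewrite -PoszD -exprnP exprD exprM rootp //.
  have := congr1 (fun h => ev h x) hw.
  rewrite /= !(evD, evM, evX, ev1, evC, evXn, evN, evXx) -!pmulrn => ->.
  rewrite natrM natrX; ring.
rewrite (@sZ_roots _ a b al be ga h1 hx hy) !key ?inE ?eqxx ?orbT //.
rewrite !rmorphD !rmorphM /= -tr3X -hz1 -hz2 /tr3 -!pmulrn; ring.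
Qed.
End Roots.

Lemma shift_rec (a b T : int) (M : int) :
  (forall i : nat, (M %| sZ (i%:Z + T) a b - sZ i a b)%Z) ->
  forall k : int, (M %| sZ (k + T) a b - sZ k a b)%Z.
Proof.
move=> hi.
apply: (@rec_ext _ (fun u => (M %| u)%Z) a b (fun k => sZ (k + T) a b - sZ k a b) 0).
- by move=> u v hu hv; rewrite rpredD.
- by move=> r u hu; rewrite dvdz_mull.
- move=> k /=.
  have e3 : k + 3 + T = (k + T) + 3 by ring.
  have e2 : k + 2 + T = (k + T) + 2 by ring.
  have e1 : k + 1 + T = (k + T) + 1 by ring.
  rewrite e3 e2 e1 !sZ_rec.
  have -> : a * sZ (k + T + 2) a b - b * sZ (k + T + 1) a b + sZ (k + T) a b -
    (a * sZ (k + 2) a b - b * sZ (k + 1) a b + sZ k a b) -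
    a * (sZ (k + T + 2) a b - sZ (k + 2) a b) + b * (sZ (k + T + 1) a b - sZ (k + 1) a b) -
    (sZ (k + T) a b - sZ k a b) = 0 by ring.
  by rewrite dvdz0.
- exact: (hi 0%N).
- exact: (hi 1%N).
- exact: (hi 2%N).
Qed.

Lemma prime_facts (ell : nat) (a b : int) (lam : nat) :
  prime ell -> irreducible_poly (fpoly ell a b) -> (ell ^ 2 + ell + 1 %| lam)%N ->
  (ell%:Z %| sZ lam a b - 3)%Z /\
  forall k : int, ((ell ^ 2)%N%:Z %| sZ (lam%:Z * k) a b - 3 - k * (sZ lam a b - 3))%Z.
Proof.
move=> pp irr hl.
have [r [G hX]] := @lift_div ell a b lam pp (@fpoly_dvd ell a b lam pp irr hl).
have [al [be [ga [h1 hx hy]]]] := cubic_roots a b.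
have PP := @prime_part a b al be ga h1 hx hy ell lam r G hX.
have [z1 hz] := PP 0%N.
have [z21 e1] := hz 1%N.
rewrite add0r muln1 mul1n in e1.
have F1 : sZ lam a b - 3 = ell%:Z * (z1 + ell%:Z * z21).
  by rewrite e1 sZ0 PoszM; ring.
have F2 (m : nat) : ((ell ^ 2)%N%:Z %| sZ (lam * m)%N a b - 3 - m%:Z * (sZ lam a b - 3))%Z.
  have [z2 e2] := hz m; rewrite add0r in e2.
  rewrite e2 F1 sZ0.
  have -> : 3 + (m * ell)%N%:Z * z1 + (ell ^ 2)%N%:Z * z2 - 3 - m%:Z * (ell%:Z * (z1 + ell%:Z * z21))
     = (ell ^ 2)%N%:Z * (z2 - m%:Z * z21) by rewrite -mulnn !PoszM; ring.
  exact: dvdz_mulr.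
split; first by rewrite F1 dvdz_mulr.
case=> m.
  rewrite -PoszM; exact: F2.
set M := m.+1.
have hneg : Negz m = - M%:Z by rewrite NegzE.
rewrite hneg.
have per := @shift_rec a b (lam * (ell * M))%N%:Z (ell ^ 2)%N%:Z.
have per' : forall i : nat, ((ell ^ 2)%N%:Z %| sZ (i%:Z + (lam * (ell * M))%N%:Z) a b - sZ i a b)%Z.
  move=> i; have [y1 hy1] := PP i; have [y2 hy2] := hy1 (ell * M)%N.
  rewrite hy2.
  have -> : sZ i a b + (ell * M * ell)%N%:Z * y1 + (ell ^ 2)%N%:Z * y2 - sZ i a b =
    (ell ^ 2)%N%:Z * (M%:Z * y1 + y2) by rewrite -mulnn !PoszM; ring.
  exact: dvdz_mulr.
have := per per' (lam%:Z * - M%:Z).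
have p1 : (1 <= ell)%N by apply: prime_gt0.
have eT : lam%:Z * - M%:Z + (lam * (ell * M))%N%:Z = (lam * (M * (ell - 1)))%N%:Z.
  rewrite !PoszM; have -> : Posz (ell - 1) = ell%:Z - 1 by lia.
  ring.
rewrite eT => hA.
have hB := F2 (M * (ell - 1))%N.
have hC : ((ell ^ 2)%N%:Z %| M%:Z * ell%:Z * (sZ lam a b - 3))%Z.
  rewrite F1 -mulnn PoszM.
  have -> : M%:Z * ell%:Z * (ell%:Z * (z1 + ell%:Z * z21)) = ell%:Z * ell%:Z * (M%:Z * (z1 + ell%:Z * z21)) by ring.
  exact: dvdz_mulr.
set X := sZ (lam * (M * (ell - 1)))%N a b.
set Y := sZ (lam%:Z * - M%:Z) a b.
set s := sZ lam a b.
move: hA hB; rewrite -/X -/Y => hA hB.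
have -> : Y - 3 - - M%:Z * (s - 3) =
  - (X - Y) + (X - 3 - (M * (ell - 1))%N%:Z * (s - 3)) + M%:Z * ell%:Z * (s - 3).
  rewrite PoszM; have -> : Posz (ell - 1) = ell%:Z - 1 by lia.
  ring.
by rewrite rpredD // rpredD // rpredN.
Qed.

Lemma modz_sub (x M : int) : (M %| (x %% M)%Z - x)%Z.
Proof.
have {2}-> := divz_eq x M.
have -> : (x %% M)%Z - ((x %/ M)%Z * M + (x %% M)%Z) = (- (x %/ M)%Z) * M by ring.
by apply: dvdz_mull; apply: dvdzz.
Qed.

Lemma Zn_intr0 (n : nat) (c : int) : (1 < n)%N -> (n%:Z %| c)%Z -> (c%:~R : 'Z_n) = 0.
Proof.
move=> n1 /dvdzP [d ->]; rewrite intrM.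
have -> : ((n%:Z)%:~R : 'Z_n) = n%:R by [].
by rewrite pchar_Zp // mulr0.
Qed.

Theorem proposition2 (p q : nat) (a b : int) :
  prime p -> prime q -> p != q -> odd p -> odd q ->
  irreducible_poly (fpoly p a b) ->
  irreducible_poly (fpoly q a b) ->
  L (p * q) (lcmn (p ^ 2 + p + 1) (q ^ 2 + q + 1)) a b \is a GRing.unit ->
  forall k : int,
    let n := (p * q)%N in
    let lam := lcmn (p ^ 2 + p + 1) (q ^ 2 + q + 1) in
    Gamma n lam (s_mod n k a b) (s_mod n (- k) a b) /\
    L n lam (s_mod n k a b) (s_mod n (- k) a b) / L n lam a b = k%:~R.
Proof.
move=> pp pq npq _ _ irp irq unitL k n lam.
have [Fp1 Fp2] := @prime_facts p a b lam pp irp (dvdn_lcml _ _).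
have [Fq1 Fq2] := @prime_facts q a b lam pq irq (dvdn_lcmr _ _).
have cpq : coprime p q by rewrite prime_coprime // dvdn_prime2 //.
have cz : coprimez p%:Z q%:Z by rewrite coprimezE.
have cz2 : coprimez (p ^ 2)%N%:Z (q ^ 2)%N%:Z by rewrite coprimezE /= coprimeXl // coprimeXr.
have n1 : (1 < n)%N by rewrite /n; have := prime_gt1 pp; have := prime_gt1 pq; nia.
have n0 : n%:Z != 0 by rewrite eqz_nat; lia.
set s := fun j => sZ j a b.
set N2 := (n ^ 2)%N%:Z.
have eN2 : N2 = n%:Z * n%:Z by rewrite /N2 -mulnn PoszM.
have F1 : (n%:Z %| s lam - 3)%Z by rewrite /n PoszM Gauss_dvdz // Fp1 Fq1.
have F2 : (N2 %| s (lam%:Z * k) - 3 - k * (s lam - 3))%Z.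
  by rewrite /N2 /n expnMn PoszM Gauss_dvdz // Fp2 Fq2.
set xk := s_mod n k a b.
set yk := s_mod n (- k) a b.
have c1 : (N2 %| sZ lam xk yk - s (lam%:Z * k))%Z.
  rewrite mulrC /s -sZ_comp; apply: sZ_cong; exact: modz_sub.
have c2 : (N2 %| s_mod n lam xk yk - sZ lam xk yk)%Z by apply: modz_sub.
have c3 : (N2 %| s_mod n lam a b - s lam)%Z by apply: modz_sub.
have nN2 : (n%:Z %| N2)%Z by rewrite eN2 dvdz_mulr // dvdzz.
set V := s_mod n lam xk yk.
set A := s_mod n lam a b.
have hV : (n%:Z %| V - 3)%Z.
  have -> : V - 3 = (V - sZ lam xk yk) + (sZ lam xk yk - s (lam%:Z * k)) +
     (s (lam%:Z * k) - 3 - k * (s lam - 3)) + k * (s lam - 3) by ring.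
  have d1 := dvdz_trans nN2 c2; have d2 := dvdz_trans nN2 c1; have d3 := dvdz_trans nN2 F2.
  by rewrite rpredD ?dvdz_mull // rpredD // rpredD.
have hA : (n%:Z %| A - 3)%Z.
  have -> : A - 3 = (A - s lam) + (s lam - 3) by ring.
  by rewrite rpredD // (dvdz_trans nN2).
split; first exact: hV.
rewrite /L -/xk -/yk -/V -/A.
move: unitL; rewrite /L -/n -/lam -/A => unitL.
set u := ((A - 3) %/ n%:Z)%Z in unitL *.
set v := ((V - 3) %/ n%:Z)%Z.
have hu : A - 3 = n%:Z * u by rewrite mulrC divzK.
have hv : V - 3 = n%:Z * v by rewrite mulrC divzK.
have hvu : (n%:Z %| v - k * u)%Z.
  rewrite -(dvdz_mul2l n0) -eN2.
  have -> : n%:Z * (v - k * u) = (V - sZ lam xk yk) + (sZ lam xk yk - s (lam%:Z * k)) +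
     (s (lam%:Z * k) - 3 - k * (s lam - 3)) - k * (A - s lam) by rewrite mulrBr -hv mulrCA -hu; ring.
  by rewrite rpredB // ?dvdz_mull // rpredD // rpredD.
have : ((v - k * u)%:~R : 'Z_n) = 0 by apply: Zn_intr0.
rewrite rmorphB rmorphM /= => /eqP; rewrite subr_eq0 => /eqP ->.
by rewrite mulrK.
Qed.
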